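(* Let $\mathcal A$ be a weakly amenable Banach algebra and let $I$ be a closed two-sided ideal of $\mathcal A$ with a bounded approximate identity. If either (i) $I$ is Arens regular, or (ii) $\mathcal A$ is Arens regular, then $\mathcal A$ is $I$-weakly amenable, i.e. $H^1(\mathcal A,I^* )=\{0\}$.
   Context: $I^*$ is a Banach $\mathcal A$-bimodule with $\langle x,a\cdot f\rangle=\langle xa,f\rangle$, $\langle x,f\cdot a\rangle=\langle ax,f\rangle$. A derivation $D:\mathcal A\to Z$ is a continuous linear map with $D(ab)=a\cdot D(b)+D(a)\cdot b$; it is inner if $D(a)=a\cdot z-z\cdot a$ for some $z\in Z$; $H^1(\mathcal A,Z)=\{0\}$ means every derivation is inner. $\mathcal A$ is weakly amenable if $H^1(\mathcal A,\mathcal A^* )=\{0\}$. *)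

(* Defs.v *)
From HB Require Import structures.
From mathcomp Require Import all_boot all_algebra.
From mathcomp Require Import complex.
From mathcomp Require Import all_classical all_reals all_analysis.
Import numFieldNormedType.Exports.
Import GRing.Theory Num.Theory.

Set Implicit Arguments.
Unset Strict Implicit.
Unset Printing Implicit Defensive.

Local Open Scope ring_scope.
Local Open Scope classical_set_scope.

Section BanachAlgebras.
Variables (R : realType) (V : completeNormedModType (R[i])).
Local Notation C := (R[i]).

Definition banach_algebra (mul : V -> V -> V) : Prop :=
  [/\ (forall a b c : V, mul a (mul b c) = mul (mul a b) c),
      (forall a b c : V, mul (a + b) c = mul a c + mul b c),
      (forall a b c : V, mul a (b + c) = mul a b + mul a c),
      (forall (k : C) (a b : V), mul (k *: a) b = k *: mul a b)
    & ((forall (k : C) (a b : V), mul a (k *: b) = k *: mul a b)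
       /\ (forall a b : V, `|mul a b| <= `|a| * `|b|))].

Definition closed_ideal (mul : V -> V -> V) (I : set V) : Prop :=
  [/\ closed I, I 0,
      (forall x y, I x -> I y -> I (x + y)),
      (forall (k : C) x, I x -> I (k *: x))
    & ((forall a x, I x -> I (mul a x))
       /\ (forall a x, I x -> I (mul x a)))].

(* Elements of the dual dual(S) of a (linear) subspace S of V, represented by
   functions V -> C whose values outside S are irrelevant:
   linear and bounded on S. *)
Definition dual_elt (S : set V) (f : V -> C) : Prop :=
  [/\ (forall x y, S x -> S y -> f (x + y) = f x + f y),
      (forall (k : C) x, S x -> f (k *: x) = k * f x)
    & (exists M : C, forall x, S x -> `|f x| <= M * `|x|)].

(* Elements of the bidual bidual(S) : functionals on dual(S) (well defined on dual(S),
   i.e. depending only on the restriction to S), linear and bounded for the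
   dual norm (bounded on the unit ball of dual(S)). *)
Definition bidual_elt (S : set V) (F : (V -> C) -> C) : Prop :=
  [/\ (forall f g, dual_elt S f -> dual_elt S g ->
          (forall x, S x -> f x = g x) -> F f = F g),
      (forall f g, dual_elt S f -> dual_elt S g ->
          F (fun x => f x + g x) = F f + F g),
      (forall (k : C) f, dual_elt S f -> F (fun x => k * f x) = k * F f)
    & (exists M : C, forall f, dual_elt S f ->
          (forall x, S x -> `|f x| <= `|x|) -> `|F f| <= M)].

(* First and second Arens products on bidual(S) (S a subalgebra), with
   <f.a, b> = f(ab), <F.f, a> = F(f.a), <F [] G, f> = <F, G.f>
   <a.f, b> = f(ba), <f.F, a> = F(a.f), <F <> G, f> = <G, f.F>. *)
Definition arens_first (mul : V -> V -> V) (F G : (V -> C) -> C)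
  : (V -> C) -> C :=
  fun f => F (fun a => G (fun b => f (mul a b))).

Definition arens_second (mul : V -> V -> V) (F G : (V -> C) -> C)
  : (V -> C) -> C :=
  fun f => G (fun a => F (fun b => f (mul b a))).

Definition arens_regular (mul : V -> V -> V) (S : set V) : Prop :=
  forall F G, bidual_elt S F -> bidual_elt S G ->
    forall f, dual_elt S f -> arens_first mul F G f = arens_second mul F G f.

(* A derivation D : A -> dual(I), where dual(I) is the dual A-bimodule
   <x, a.f> = <xa, f>, <x, f.a> = <ax, f>  (x in I).
   D is linear and continuous (bounded: ||D a|| <= M ||a||). *)
Definition dual_derivation (mul : V -> V -> V) (I : set V)
    (D : V -> V -> C) : Prop :=
  [/\ (forall a, dual_elt I (D a)),
      (forall a b x, I x -> D (a + b) x = D a x + D b x),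
      (forall (k : C) a x, I x -> D (k *: a) x = k * D a x),
      (exists M : C, forall a x, I x -> `|D a x| <= M * `|a| * `|x|)
    & (forall a b x, I x -> D (mul a b) x = D b (mul x a) + D a (mul b x))].

(* D is inner: D a = a.z - z.a for some z in dual(I). *)
Definition inner_dual_derivation (mul : V -> V -> V) (I : set V)
    (D : V -> V -> C) : Prop :=
  exists z, dual_elt I z /\
    forall a x, I x -> D a x = z (mul x a) - z (mul a x).

Definition H1_dual_trivial (mul : V -> V -> V) (I : set V) : Prop :=
  forall D, dual_derivation mul I D -> inner_dual_derivation mul I D.

Definition weakly_amenable (mul : V -> V -> V) : Prop :=
  H1_dual_trivial mul setT.

Definition I_weakly_amenable (mul : V -> V -> V) (I : set V) : Prop :=
  H1_dual_trivial mul I.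

Definition directed (T : Type) (le : T -> T -> Prop) : Prop :=
  [/\ (exists t : T, True),
      (forall t, le t t),
      (forall s t u, le s t -> le t u -> le s u)
    & (forall s t, exists u, le s u /\ le t u)].

Definition has_bai (mul : V -> V -> V) (I : set V) : Prop :=
  exists (T : Type) (le : T -> T -> Prop) (e : T -> V),
    [/\ directed le,
        (forall t, I (e t)),
        (exists M : C, forall t, `|e t| <= M)
      & (forall x, I x -> forall eps : C, 0 < eps ->
           exists t0, forall t, le t0 t ->
             `|mul (e t) x - x| < eps /\ `|mul x (e t) - x| < eps)].

End BanachAlgebras.

(* Main.v *)
Require Import Defs.
From HB Require Import structures.
From mathcomp Require Import all_boot all_algebra.
From mathcomp Require Import complex.
From mathcomp Require Import all_classical all_reals all_analysis.
From mathcomp Require Import ring lra.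
Import numFieldNormedType.Exports.
Import GRing.Theory Num.Theory.
Import order.Order.TTheory.
Set Implicit Arguments.
Unset Strict Implicit.
Local Open Scope ring_scope.
Local Open Scope classical_set_scope.

Section RLim.
Variables (R : realType) (T : Type) (U : set_system T).
Context (UU : UltraFilter U).

Lemma rlim_ex (h : T -> R) (B : R) : (forall t, `|h t| <= B) ->
  exists p, `|p| <= B /\ h @ U --> p.
Proof.
move=> hB.
have HB : (h @ U) `[- B, B].
  rewrite /fmap /=; apply: filterS (@filterT _ U _) => t _ /=. rewrite in_itv /= -ler_norml. exact: hB.
have [p [Pp Cp]] := @segment_compact R (- B) B (h @ U) _ HB.
exists p; split; first by move: Pp; rewrite /= in_itv /= -ler_norml.
move=> W Wp.
case: (in_ultra_setVsetC (h @^-1` W) UU) => // HC.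
have [x [/= Hx1 Hx2]] := Cp (~` W) W HC Wp.
by exfalso.
Qed.

Definition rlim (h : T -> R) : R := lim (h @ U).
Definition rbnd (h : T -> R) := exists B : R, forall t, `|h t| <= B.

Lemma rlimP (h : T -> R) : rbnd h -> h @ U --> rlim h.
Proof.
case=> B hB; have [p [_ Hp]] := rlim_ex hB.
by rewrite /rlim (cvg_lim (@Rhausdorff R) Hp).
Qed.

Lemma rlim_le (h : T -> R) B : (forall t, `|h t| <= B) -> `|rlim h| <= B.
Proof.
move=> hB; have [p [Bp Hp]] := rlim_ex hB.
by rewrite /rlim (cvg_lim (@Rhausdorff R) Hp).
Qed.

Lemma rlimD (h1 h2 : T -> R) : rbnd h1 -> rbnd h2 ->
  rlim (fun t => h1 t + h2 t) = rlim h1 + rlim h2.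
Proof.
move=> b1 b2; apply: (cvg_lim (@Rhausdorff R)).
exact: (cvgD (rlimP b1) (rlimP b2)).
Qed.

Lemma rlimM (h : T -> R) k : rbnd h ->
  rlim (fun t => k * h t) = k * rlim h.
Proof.
move=> b; apply: (cvg_lim (@Rhausdorff R)).
exact: (cvgMr (rlimP b)).
Qed.

Lemma rlim_tail (h : T -> R) c :
  (forall eps : R, 0 < eps -> U [set t | `|h t - c| < eps]) -> rlim h = c.
Proof.
move=> Hc; apply: (cvg_lim (@Rhausdorff R)).
apply/cvgrPdist_lt => eps eps0.
by apply: filterS (Hc eps eps0) => t /=; rewrite distrC.
Qed.

End RLim.

Local Open Scope complex_scope.

Notation cRe := (@complex.Re _).
Notation cIm := (@complex.Im _).

Section CHelp.
Variable R : realType.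

Lemma ReD (x y : R[i]) : cRe (x + y) = cRe x + cRe y.
Proof. by case: x => ? ?; case: y => ? ? /=. Qed.
Lemma ImD (x y : R[i]) : cIm (x + y) = cIm x + cIm y.
Proof. by case: x => ? ?; case: y => ? ? /=. Qed.
Lemma ReB (x y : R[i]) : cRe (x - y) = cRe x - cRe y.
Proof. by case: x => ? ?; case: y => ? ? /=. Qed.
Lemma ImB (x y : R[i]) : cIm (x - y) = cIm x - cIm y.
Proof. by case: x => ? ?; case: y => ? ? /=. Qed.
Lemma ReM (x y : R[i]) : cRe (x * y) = cRe x * cRe y - cIm x * cIm y.
Proof. by case: x => ? ?; case: y => ? ? /=. Qed.
Lemma ImM (x y : R[i]) : cIm (x * y) = cRe x * cIm y + cIm x * cRe y.
Proof. by case: x => ? ?; case: y => ? ? /=. Qed.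

Lemma Re_le_norm (z : R[i]) : `|cRe z| <= Num.sqrt (cRe z ^+ 2 + cIm z ^+ 2).
Proof.
rewrite -sqrtr_sqr; apply: ler_wsqrtr.
by rewrite lerDl sqr_ge0.
Qed.
Lemma Im_le_norm (z : R[i]) : `|cIm z| <= Num.sqrt (cRe z ^+ 2 + cIm z ^+ 2).
Proof.
rewrite -sqrtr_sqr; apply: ler_wsqrtr.
by rewrite lerDr sqr_ge0.
Qed.

Lemma Re_le (z B : R[i]) : `|z| <= B -> `|cRe z| <= cRe B.
Proof.
rewrite normc_def lecE => /andP [_ H]; apply: le_trans H.
exact: Re_le_norm.
Qed.
Lemma Im_le (z B : R[i]) : `|z| <= B -> `|cIm z| <= cRe B.
Proof.
rewrite normc_def lecE => /andP [_ H]; apply: le_trans H.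
exact: Im_le_norm.
Qed.
Lemma Re_lt (z : R[i]) (e : R) : `|z| < e%:C -> `|cRe z| < e.
Proof.
rewrite normc_def ltcE => /andP [_ H]; apply: le_lt_trans H.
exact: Re_le_norm.
Qed.
Lemma Im_lt (z : R[i]) (e : R) : `|z| < e%:C -> `|cIm z| < e.
Proof.
rewrite normc_def ltcE => /andP [_ H]; apply: le_lt_trans H.
exact: Im_le_norm.
Qed.
End CHelp.

Section CLim.
Variables (R : realType) (T : Type) (U : set_system T).
Context (UU : UltraFilter U).
Local Notation rl := (@rlim R T U).
Local Notation rb := (@rbnd R T).

Definition CL (g : T -> R[i]) : R[i] :=
  rl (fun t => cRe (g t)) +i* rl (fun t => cIm (g t)).
Definition cbnd (g : T -> R[i]) := exists B : R[i], forall t, `|g t| <= B.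

Lemma cbnd_Re g : cbnd g -> rb (fun t => cRe (g t)).
Proof. by case=> B hB; exists (cRe B) => t; apply: Re_le. Qed.
Lemma cbnd_Im g : cbnd g -> rb (fun t => cIm (g t)).
Proof. by case=> B hB; exists (cRe B) => t; apply: Im_le. Qed.

Lemma rbndM (h : T -> R) k : rb h -> rb (fun t => k * h t).
Proof.
case=> B hB; exists (`|k| * B) => t; rewrite normrM.
by apply: ler_wpM2l => //.
Qed.

Lemma CLD g h : cbnd g -> cbnd h -> CL (fun t => g t + h t) = CL g + CL h.
Proof.
move=> bg bh; rewrite /CL.
have -> : (fun t => cRe (g t + h t)) = (fun t => cRe (g t) + cRe (h t)).
  by apply: funext => t; rewrite ReD.
have -> : (fun t => cIm (g t + h t)) = (fun t => cIm (g t) + cIm (h t)).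
  by apply: funext => t; rewrite ImD.
have := cbnd_Re bg; have := cbnd_Im bg; have := cbnd_Re bh; have := cbnd_Im bh.
by move=> *; rewrite !rlimD.
Qed.

Lemma CLM g k : cbnd g -> CL (fun t => k * g t) = k * CL g.
Proof.
move=> bg; rewrite /CL.
have -> : (fun t => cRe (k * g t)) =
   (fun t => cRe k * cRe (g t) + (- cIm k) * cIm (g t)).
  by apply: funext => t; rewrite ReM mulNr.
have -> : (fun t => cIm (k * g t)) =
   (fun t => cRe k * cIm (g t) + cIm k * cRe (g t)).
  by apply: funext => t; rewrite ImM.
have bR := cbnd_Re bg; have bI := cbnd_Im bg.
rewrite !rlimD; try exact: rbndM.
rewrite !rlimM //.
by case: k => a b /=; rewrite mulNr.
Qed.

Lemma CL_tail g c :
  (forall eps : R, 0 < eps -> U [set t | `|g t - c| < eps%:C]) -> CL g = c.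
Proof.
move=> Hc; rewrite /CL.
rewrite (@rlim_tail _ _ _ UU _ (cRe c)); last first.
  move=> eps eps0; apply: filterS (Hc eps eps0) => t /= /Re_lt.
  by rewrite ReB.
rewrite (@rlim_tail _ _ _ UU _ (cIm c)); last first.
  move=> eps eps0; apply: filterS (Hc eps eps0) => t /= /Im_lt.
  by rewrite ImB.
by case: (c).
Qed.

Lemma CL_le g (B : R[i]) : 0 <= B -> (forall t, `|g t| <= B) ->
  `|CL g| <= 2%:R * B.
Proof.
move=> B0 hB.
have hR : `|rl (fun t => cRe (g t))| <= cRe B.
  by apply: rlim_le => // t; apply: Re_le.
have hI : `|rl (fun t => cIm (g t))| <= cRe B.
  by apply: rlim_le => // t; apply: Im_le.
have EB : B = (cRe B)%:C.
  have := ger0_Im B0; clear -B; by case: B => a b /= ->.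
rewrite EB.
rewrite normc_def /CL /=.
set a := rl _ in hR *; set b := rl _ in hI *.
have -> : (2%:R * (cRe B)%:C = (2%:R * cRe B)%:C :> R[i]).
  by rewrite rmorphM /= rmorph_nat.
rewrite lecR.
have r0 : 0 <= cRe B by apply: le_trans hR.
rewrite -[X in _ <= X](@ger0_norm _ (2%:R * cRe B)); last by rewrite mulr_ge0.
rewrite -sqrtr_sqr; apply: ler_wsqrtr.
move: hR hI; rewrite !ler_norml => /andP [a1 a2] /andP [b1 b2].
nra.
Qed.

End CLim.

Section Main.
Variables (R : realType) (V : completeNormedModType (R[i])).
Variables (mul : V -> V -> V) (I : set V).
Local Notation C := (R[i]).
Hypothesis HA : banach_algebra mul.
Hypothesis HI : closed_ideal mul I.

Lemma mulA a b c : mul a (mul b c) = mul (mul a b) c.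
Proof. by case: HA. Qed.
Lemma mulDl a b c : mul (a + b) c = mul a c + mul b c.
Proof. by case: HA. Qed.
Lemma mulDr a b c : mul a (b + c) = mul a b + mul a c.
Proof. by case: HA. Qed.
Lemma mulZl (k : C) a b : mul (k *: a) b = k *: mul a b.
Proof. by case: HA. Qed.
Lemma mulZr (k : C) a b : mul a (k *: b) = k *: mul a b.
Proof. by case: HA => _ _ _ _ []. Qed.
Lemma mul_norm a b : `|mul a b| <= `|a| * `|b|.
Proof. by case: HA => _ _ _ _ []. Qed.

Lemma ID x y : I x -> I y -> I (x + y).
Proof. by case: HI => _ _ H _ _; apply: H. Qed.
Lemma IZ (k : C) x : I x -> I (k *: x).
Proof. by case: HI => _ _ _ H _; apply: H. Qed.
Lemma Il a x : I x -> I (mul a x).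
Proof. by case: HI => _ _ _ _ [H _]; apply: H. Qed.
Lemma Ir a x : I x -> I (mul x a).
Proof. by case: HI => _ _ _ _ [_ H]; apply: H. Qed.
Lemma IB x y : I x -> I y -> I (x - y).
Proof. by move=> Ix Iy; rewrite -scaleN1r; apply: ID => //; apply: IZ. Qed.

Lemma nrm_fix (u M w : C) : 0 <= w -> `|u| <= M * w -> `|u| <= `|M| * w.
Proof.
move=> w0 H; have h : 0 <= M * w by apply: le_trans H.
by rewrite -(ger0_norm w0) -normrM ger0_norm.
Qed.

Lemma dual_bnd (S : set V) f : dual_elt S f ->
  exists M : C, 0 <= M /\ forall x, S x -> `|f x| <= M * `|x|.
Proof.
case=> _ _ [M HM]; exists `|M|; split => // x Sx.
by apply: nrm_fix => //; apply: HM.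
Qed.

Lemma dualB f x y : dual_elt I f -> I x -> I y -> f x - f y = f (x - y).
Proof.
case=> Hadd _ _ Ix Iy.
have E := Hadd _ _ Iy (IB Ix Iy).
rewrite [y + _]addrC subrK in E.
by rewrite E addrAC subrr add0r.
Qed.

Section Net.
Variables (T : Type) (U : set_system T).
Context (UU : UltraFilter U).
Local Notation CL := (@CL R T U).

Lemma net_bnd (S : set V) f (w : T -> V) (B : C) : dual_elt S f ->
  (forall t, S (w t)) -> (forall t, `|w t| <= B) -> cbnd (fun t => f (w t)).
Proof.
move=> /dual_bnd [M [M0 HM]] Sw wB; exists (M * B) => t.
apply: le_trans (HM _ (Sw t)) _.
by apply: ler_wpM2l.
Qed.

Lemma bidual_net (S : set V) (w : T -> V) (B : C) :
  (forall t, S (w t)) -> (forall t, `|w t| <= B) ->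
  bidual_elt S (fun f => CL (fun t => f (w t))).
Proof.
move=> Sw wB; split.
- move=> f g _ _ Hfg; congr CL; apply: funext => t; exact: Hfg.
- move=> f g df dg; apply: CLD => //; exact: net_bnd Sw wB.
- move=> k f df; apply: CLM => //; exact: net_bnd Sw wB.
- exists (2%:R * `|B|) => f df Hf; apply: CL_le => // t.
  apply: le_trans (Hf _ (Sw t)) _; apply: le_trans (wB t) _.
  apply: real_ler_norm; apply: ger0_real; exact: le_trans (normr_ge0 _) (wB t).
Qed.

End Net.

Section BAI.
Variables (T : Type) (le : T -> T -> Prop) (e : T -> V) (Me : C).
Hypothesis HeI : forall t, I (e t).
Hypothesis HMe : forall t, `|e t| <= Me.
Hypothesis Me0 : 0 <= Me.
Hypothesis Happ : forall x, I x -> forall eps : C, 0 < eps ->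
           exists t0, forall t, le t0 t ->
             `|mul (e t) x - x| < eps /\ `|mul x (e t) - x| < eps.
Variables (U : set_system T).
Context (UU : UltraFilter U).
Hypothesis Htail : forall t0, U [set t | le t0 t].
Local Notation CL := (@CL R T U).

Lemma approx_lt (M : C) (eps : R) : 0 <= M -> 0 < eps ->
  exists2 d : C, 0 < d & forall u : C, 0 <= u -> u < d -> M * u < eps%:C.
Proof.
move=> M0 eps0.
have M1 : 0 < M + 1 by apply: (le_lt_trans M0); rewrite ltrDl ltr01.
have e0 : 0 < eps%:C :> C by rewrite ltcE /= eqxx eps0.
exists (eps%:C / (M + 1)); first by rewrite divr_gt0.
move=> u u0 ud.
apply: (@le_lt_trans _ _ ((M + 1) * u)).
  by apply: ler_wpM2r => //; rewrite lerDl ler01.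
have -> : eps%:C = (M + 1) * (eps%:C / (M + 1)).
  by rewrite mulrC divfK // lt0r_neq0.
by rewrite ltr_pM2l.
Qed.

Lemma CLleft f x : dual_elt I f -> I x -> CL (fun s => f (mul (e s) x)) = f x.
Proof.
move=> df Ix; have [M [M0 HM]] := dual_bnd df.
apply: CL_tail => eps eps0.
have [d d0 Hd] := approx_lt M0 eps0.
have [t0 Ht0] := Happ Ix d0.
apply: filterS (Htail t0) => t /Ht0 [H1 _].
rewrite /= (dualB df) //; last exact: Il.
apply: le_lt_trans (HM _ (IB (Il _ Ix) Ix)) _.
exact: Hd.
Qed.

Lemma CLright f x : dual_elt I f -> I x -> CL (fun s => f (mul x (e s))) = f x.
Proof.
move=> df Ix; have [M [M0 HM]] := dual_bnd df.
apply: CL_tail => eps eps0.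
have [d d0 Hd] := approx_lt M0 eps0.
have [t0 Ht0] := Happ Ix d0.
apply: filterS (Htail t0) => t /Ht0 [_ H1].
rewrite /= (dualB df) //; last exact: Ir.
apply: le_lt_trans (HM _ (IB (Ir _ Ix) Ix)) _.
exact: Hd.
Qed.


Lemma wl_bnd u t : `|mul (e t) u| <= Me * `|u|.
Proof.
apply: le_trans (mul_norm _ _) _.
by apply: ler_wpM2r => //.
Qed.

Lemma wr_bnd u t : `|mul u (e t)| <= `|u| * Me.
Proof.
apply: le_trans (mul_norm _ _) _.
by apply: ler_wpM2l => //.
Qed.

Lemma ext_dual f : dual_elt I f ->
  dual_elt setT (fun u => CL (fun s => f (mul (e s) u))).
Proof.
move=> df; have df' := df; case: df' => Hadd Hsc _.
have [M [M0 HM]] := dual_bnd df.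
have nb u : cbnd (fun s => f (mul (e s) u)).
  by apply: (net_bnd df (fun s => Ir u (HeI s)) (wl_bnd u)).
split.
- move=> u v _ _.
  have -> : (fun s => f (mul (e s) (u + v))) =
            (fun s => f (mul (e s) u) + f (mul (e s) v)).
    by apply: funext => s; rewrite mulDr Hadd //; apply: Ir.
  by apply: CLD.
- move=> k u _.
  have -> : (fun s => f (mul (e s) (k *: u))) =
            (fun s => k * f (mul (e s) u)).
    by apply: funext => s; rewrite mulZr Hsc //; apply: Ir.
  by apply: CLM.
- exists (2%:R * (M * Me)) => u _.
  rewrite -!mulrA; apply: CL_le.
    by rewrite !mulr_ge0.
  move=> t; apply: le_trans (HM _ (Ir u (HeI t))) _.
  by apply: ler_wpM2l => //; apply: wl_bnd.
Qed.

Lemma first_eq f y : dual_elt I f ->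
  CL (fun s => CL (fun t => f (mul (mul (e s) y) (e t)))) =
  CL (fun s => f (mul (e s) y)).
Proof.
move=> df; congr CL; apply: funext => s.
by apply: CLright => //; apply: Ir.
Qed.

Lemma second_eq f y : dual_elt I f ->
  CL (fun t => CL (fun s => f (mul (mul (e s) y) (e t)))) =
  CL (fun t => f (mul y (e t))).
Proof.
move=> df; congr CL; apply: funext => t.
have -> : (fun s => f (mul (mul (e s) y) (e t))) =
          (fun s => f (mul (e s) (mul y (e t)))).
  by apply: funext => s; rewrite mulA.
by apply: CLleft => //; apply: Il.
Qed.

Hypothesis Hreg : arens_regular mul I \/ arens_regular mul setT.

Lemma keyLR f y : dual_elt I f ->
  CL (fun s => f (mul (e s) y)) = CL (fun t => f (mul y (e t))).
Proof.
move=> df.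
have bFI := bidual_net UU (fun s => Ir y (HeI s)) (wl_bnd y).
have bGI := bidual_net UU HeI HMe.
case: Hreg => Hr.
  have := Hr _ _ bFI bGI f df.
  rewrite /arens_first /arens_second /=.
  by rewrite first_eq // second_eq.
pose g u := CL (fun s => f (mul (e s) u)).
have dg : dual_elt setT g by apply: ext_dual.
have Eg x : I x -> g x = f x by move=> Ix; apply: CLleft.
have bF := bidual_net UU (S := setT) (fun s => Logic.I) (wl_bnd y).
have bG := bidual_net UU (S := setT) (fun s => Logic.I) HMe.
have := Hr _ _ bF bG g dg.
rewrite /arens_first /arens_second /=.
have -> : (fun s => CL (fun t => g (mul (mul (e s) y) (e t)))) =
          (fun s => CL (fun t => f (mul (mul (e s) y) (e t)))).
  apply: funext => s; congr CL; apply: funext => t.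
  by apply: Eg; apply: Ir; apply: Ir.
have -> : (fun t => CL (fun s => g (mul (mul (e s) y) (e t)))) =
          (fun t => CL (fun s => f (mul (mul (e s) y) (e t)))).
  apply: funext => t; congr CL; apply: funext => s.
  by apply: Eg; apply: Ir; apply: Ir.
by rewrite first_eq // second_eq.
Qed.


Lemma mul_dual f b : dual_elt I f -> dual_elt I (fun y => f (mul b y)).
Proof.
move=> df; have df' := df; case: df' => Hadd Hsc _.
have [M [M0 HM]] := dual_bnd df.
split.
- by move=> x y Ix Iy; rewrite mulDr Hadd //; apply: Il.
- by move=> k x Ix; rewrite mulZr Hsc //; apply: Il.
- exists (M * `|b|) => x Ix; apply: le_trans (HM _ (Il b Ix)) _.
  by rewrite -mulrA; apply: ler_wpM2l => //; apply: mul_norm.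
Qed.

Lemma main_inner D : dual_derivation mul I D -> weakly_amenable mul ->
  inner_dual_derivation mul I D.
Proof.
case=> HD1 HD2 HD3 [MD HMD] HD5 Hwa.
pose D' a y := CL (fun s => D a (mul (e s) y)).
have nb a y : cbnd (fun s => D a (mul (e s) y)).
  by apply: (net_bnd (HD1 a) (fun s => Ir y (HeI s)) (wl_bnd y)).
have HD' : dual_derivation mul setT D'.
  split.
  - by move=> a; apply: ext_dual.
  - move=> a b x _; rewrite /D'.
    have -> : (fun s => D (a + b) (mul (e s) x)) =
              (fun s => D a (mul (e s) x) + D b (mul (e s) x)).
      by apply: funext => s; rewrite HD2 //; apply: Ir.
    by apply: CLD.
  - move=> k a x _; rewrite /D'.
    have -> : (fun s => D (k *: a) (mul (e s) x)) =
              (fun s => k * D a (mul (e s) x)).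
      by apply: funext => s; rewrite HD3 //; apply: Ir.
    by apply: CLM.
  - exists (2%:R * `|MD| * Me) => a x _; rewrite /D'.
    have H : `|CL (fun s => D a (mul (e s) x))| <=
             2%:R * (`|MD| * `|a| * (Me * `|x|)).
      apply: CL_le; first by rewrite !mulr_ge0.
      move=> t; have Ix : I (mul (e t) x) by apply: Ir.
      have := HMD a _ Ix; rewrite -mulrA => /nrm_fix.
      rewrite mulrA => /(_ (mulr_ge0 (normr_ge0 _) (normr_ge0 _))) H1.
      apply: le_trans H1 _; apply: ler_wpM2l; first by rewrite mulr_ge0.
      exact: wl_bnd.
    apply: le_trans H _; rewrite le_eqVlt; apply/orP; left; apply/eqP; ring.
  - move=> a b x _; rewrite /D'.
    have -> : (fun s => D (mul a b) (mul (e s) x)) =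
              (fun s => D b (mul (e s) (mul x a)) + D a (mul b (mul (e s) x))).
      apply: funext => s; rewrite HD5; last by apply: Ir.
      by rewrite -[mul (mul (e s) x) a]mulA.
    have dpsi := mul_dual b (HD1 a).
    rewrite CLD //; last first.
      exact: (net_bnd dpsi (fun s => Ir x (HeI s)) (wl_bnd x)).
    congr (_ + _).
    have K1 := keyLR x dpsi; rewrite /= in K1; rewrite K1.
    have -> : (fun t => D a (mul b (mul x (e t)))) =
              (fun t => D a (mul (mul b x) (e t))).
      by apply: funext => t; rewrite mulA.
    by rewrite -keyLR.
have [z [dz Hz]] := Hwa D' HD'.
exists z; split.
  case: dz => H1 H2 H3; split.
  - by move=> x y _ _; apply: H1.
  - by move=> k x _; apply: H2.
  - case: H3 => M HM; exists M => x _; exact: HM.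
move=> a x Ix.
rewrite -(CLleft (HD1 a) Ix).
exact: (Hz a x Logic.I).
Qed.

End BAI.

End Main.

Unset Implicit Arguments.
Set Strict Implicit.

Theorem corollary3p4 (R : realType) (V : completeNormedModType (R[i]))
    (mul : V -> V -> V) (I : set V) :
  banach_algebra mul ->
  weakly_amenable mul ->
  closed_ideal mul I ->
  has_bai mul I ->
  (arens_regular mul I \/ arens_regular mul setT) ->
  I_weakly_amenable mul I.
Proof.
move=> HA Hwa HI [T [le [e [Hdir HeI [Me HMe] Happ]]]] Hreg D HD.
case: Hdir => [[t0 _] Hrefl Htrans Hup].
have Me0 : 0 <= Me by apply: le_trans (normr_ge0 _) (HMe t0).
pose F0 := filter_from [set: T] (fun i => [set t | le i t]).
have F0F : Filter F0.
  apply: filter_from_filter; first by exists t0.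
  move=> i j _ _; have [u [iu ju]] := Hup i j.
  exists u => // t /= ut; split; [exact: Htrans iu ut|exact: Htrans ju ut].
have F0P : ProperFilter F0.
  by apply: filter_from_proper => i _; exists i; apply: Hrefl.
have [U [UU sFU]] := ultraFilterLemma F0P.
have Htail : forall i, U [set t | le i t].
  by move=> i; apply: sFU; exists i.
exact: (main_inner HA HI HeI HMe Me0 Happ UU Htail Hreg HD Hwa).
Qed.
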